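(* Let $(F,\phi)$ be an acyclic extended representation graph for $E$, let $w\in F^0$, and let $p,q$ be paths in $F$ (of length $\ge0$) with source $w$. Then $r(p)=r(q)$ if and only if $p=q$.
   Context: $E$ is a row-finite directed graph with, for each vertex $v$ emitting an edge, a chosen special edge $e^v\in s^{-1}(v)$; other edges are nonspecial. The double graph $E_d$ has vertices $E^0$ and edges $e$ (real) and $e^*$ (ghost) for $e\in E^1$, with $s_d(e)=s(e),r_d(e)=r(e),s_d(e^* )=r(e),r_d(e^* )=s(e)$. Paths of length $0$ are vertices $w$ with $s(w)=r(w)=w$. A graph is acyclic if it contains no cycle (closed path of length $\ge1$ with pairwise distinct vertex sources). An extended representation graph for $E$ is a pair $(F,\phi)$, $F$ a directed graph, $\phi:F\to E_d$ a graph homomorphism, such that for every $w\in F^0$: (i) $w$ is a source or receives exactly one edge $f_w$; (ii) if $w$ is a source or $\phi(f_w)$ is a nonspecial real edge, $\phi$ maps $s^{-1}(w)$ bijectively onto $s_d^{-1}(\phi(w))$; (iii) if $\phi(f_w)$ is a special real edge, onto $s_d^{-1}(\phi(w))\setminus\{\phi(f_w)^*\}$; (iv) if $\phi(f_w)$ is a ghost edge, onto the ghost edges in $s_d^{-1}(\phi(w))$. *)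

(* Defs.v *)
From Stdlib Require Import List.
Import ListNotations.
Set Implicit Arguments.

Record graph := Graph {
  vert : Type;
  edge : Type;
  src : edge -> vert;
  rng : edge -> vert
}.
Arguments src {g} _.
Arguments rng {g} _.

Definition row_finite (E : graph) : Prop :=
  forall v : vert E, exists l : list (edge E), forall e, src e = v -> In e l.

(* Choice of special edges: sp v = Some e^v for every vertex v emitting an edge.
   An edge e is special iff it is the chosen edge e^{s(e)}. *)
Definition special_choice (E : graph) (sp : vert E -> option (edge E)) : Prop :=
  (forall v e, sp v = Some e -> src e = v) /\
  (forall v, (exists e, src e = v) -> sp v <> None).

Definition is_special (E : graph) (sp : vert E -> option (edge E)) (e : edge E) : Prop :=
  sp (src e) = Some e.
Arguments is_special {E} sp e.

(* The double graph E_d: real edges inl e, ghost edges inr e = e^*. *)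
Definition dsrc (E : graph) (x : edge E + edge E) : vert E :=
  match x with inl e => src e | inr e => rng e end.
Definition drng (E : graph) (x : edge E + edge E) : vert E :=
  match x with inl e => rng e | inr e => src e end.
Arguments dsrc {E} x.
Arguments drng {E} x.
Definition double (E : graph) : graph := Graph (@dsrc E) (@drng E).

Definition is_ghost (E : graph) (x : edge E + edge E) : Prop :=
  match x with inl _ => False | inr _ => True end.
Arguments is_ghost {E} x.

Definition graph_hom (F G : graph) (phi0 : vert F -> vert G) (phi1 : edge F -> edge G) : Prop :=
  forall f, src (phi1 f) = phi0 (src f) /\ rng (phi1 f) = phi0 (rng f).

Definition bij_onto (F G : graph) (phi1 : edge F -> edge G) (w : vert F)
    (T : edge G -> Prop) : Prop :=
  (forall f, src f = w -> T (phi1 f)) /\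
  (forall f g, src f = w -> src g = w -> phi1 f = phi1 g -> f = g) /\
  (forall x, T x -> exists f, src f = w /\ phi1 f = x).

Definition ext_rep_graph (E : graph) (sp : vert E -> option (edge E)) (F : graph)
    (phi0 : vert F -> vert E) (phi1 : edge F -> edge E + edge E) : Prop :=
  @graph_hom F (double E) phi0 phi1 /\
  forall w : vert F,
    ((forall f, rng f <> w) \/ (exists f, rng f = w /\ forall g, rng g = w -> g = f)) /\
    ((forall f, rng f <> w) ->
       @bij_onto F (double E) phi1 w (fun x => dsrc x = phi0 w)) /\
    (forall f, rng f = w ->
       (forall e, phi1 f = inl e -> ~ is_special sp e ->
          @bij_onto F (double E) phi1 w (fun x => dsrc x = phi0 w)) /\
       (forall e, phi1 f = inl e -> is_special sp e ->
          @bij_onto F (double E) phi1 w (fun x => dsrc x = phi0 w /\ x <> inr e)) /\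
       (forall e, phi1 f = inr e ->
          @bij_onto F (double E) phi1 w (fun x => dsrc x = phi0 w /\ is_ghost x))).

(* Paths: a path with source v is a list of edges e1 ... en with
   s(e1) = v and r(ei) = s(e(i+1)); the empty list is the length-0 path v. *)
Fixpoint is_path (F : graph) (v : vert F) (l : list (edge F)) : Prop :=
  match l with
  | [] => True
  | e :: l' => src e = v /\ @is_path F (rng e) l'
  end.

Fixpoint path_rng (F : graph) (v : vert F) (l : list (edge F)) : vert F :=
  match l with
  | [] => v
  | e :: l' => @path_rng F (rng e) l'
  end.

Arguments is_path {F} v l.
Arguments path_rng {F} v l.

Definition is_cycle (F : graph) (v : vert F) (l : list (edge F)) : Prop :=
  is_path v l /\ l <> [] /\ path_rng v l = v /\ NoDup (map (@src F) l).

Arguments is_cycle {F} v l.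
Definition acyclic (F : graph) : Prop := forall v l, ~ @is_cycle F v l.
Arguments special_choice {E} sp.
Arguments ext_rep_graph {E} sp {F} phi0 phi1.

(* Main.v *)
Require Import Defs.
From Stdlib Require Import List Classical Lia.
Import ListNotations.

Lemma is_path_app (F : graph) (v : vert F) l1 l2 :
  is_path v (l1 ++ l2) <-> is_path v l1 /\ is_path (path_rng v l1) l2.
Proof.
  revert v; induction l1 as [|e l1 IH]; intro v; simpl.
  - tauto.
  - rewrite IH. tauto.
Qed.

Lemma path_rng_app (F : graph) (v : vert F) l1 l2 :
  path_rng v (l1 ++ l2) = path_rng (path_rng v l1) l2.
Proof.
  revert v; induction l1 as [|e l1 IH]; intro v; simpl; auto.
Qed.

Lemma not_nodup_split (F : graph) (l : list (edge F)) :
  ~ NoDup (map (@src F) l) ->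
  exists l1 e l2 e' l3, l = l1 ++ e :: l2 ++ e' :: l3 /\ src e = src e'.
Proof.
  induction l as [|x l IH]; intro H.
  - exfalso; apply H; constructor.
  - destruct (classic (exists e', In e' l /\ src e' = src x)) as [[e' [Hin Hs]]|Hno].
    + destruct (in_split _ _ Hin) as [l2 [l3 Hl]].
      exists [], x, l2, e', l3. subst. split; auto.
    + assert (Hn : ~ NoDup (map (@src F) l)).
      { intro Hd. apply H. simpl. constructor; auto.
        intro Hi. apply in_map_iff in Hi. destruct Hi as [y [Hy Hi]]. apply Hno; eauto. }
      destruct (IH Hn) as [l1 [e [l2 [e0 [l3 [Hl Hs]]]]]].
      exists (x :: l1), e, l2, e0, l3. subst. split; auto.
Qed.

Lemma closed_has_cycle (F : graph) n : forall (v : vert F) l,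
  length l <= n -> is_path v l -> l <> [] -> path_rng v l = v ->
  exists (v' : vert F) l', is_cycle v' l'.
Proof.
  induction n as [|n IH]; intros v l Hlen Hp Hne Hr.
  - destruct l; simpl in *; [congruence | lia].
  - destruct (classic (NoDup (map (@src F) l))) as [Hd|Hd].
    + exists v, l. repeat split; auto.
    + destruct (@not_nodup_split F _ Hd) as [l1 [e [l2 [e' [l3 [Hl Hs]]]]]].
      subst l.
      apply is_path_app in Hp. destruct Hp as [_ Hp]. simpl in Hp.
      destruct Hp as [He Hp].
      apply is_path_app in Hp. destruct Hp as [Hp1 Hp2].
      simpl in Hp2. destruct Hp2 as [He' _].
      apply (IH (src e) (e :: l2)).
      * rewrite length_app in Hlen. simpl in Hlen. rewrite length_app in Hlen. simpl in Hlen |- *. lia.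
      * simpl. split; auto.
      * discriminate.
      * simpl in He' |- *. congruence.
Qed.

Theorem lemma5p10 (E : graph) (sp : vert E -> option (edge E))
    (F : graph) (phi0 : vert F -> vert E) (phi1 : edge F -> edge E + edge E) :
  row_finite E -> special_choice sp ->
  ext_rep_graph sp phi0 phi1 -> acyclic F ->
  forall (w : vert F) (p q : list (edge F)),
    is_path w p -> is_path w q ->
    (path_rng w p = path_rng w q <-> p = q).
Proof.
  intros _ _ [_ Hrep] Hac w p q Hp Hq.
  split; [|intro; subst; reflexivity].
  assert (Hcl : forall l, is_path w l -> l <> [] -> path_rng w l = w -> False).
  { intros l Hl Hne Hr.
    destruct (@closed_has_cycle F (length l) w l (le_n _) Hl Hne Hr) as [v' [l' Hc]].
    exact (Hac v' l' Hc). }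
  assert (Huniq : forall e f : edge F, rng e = rng f -> e = f).
  { intros e f H. destruct (Hrep (rng f)) as [[Hs|[g [_ Hg]]] _].
    - exfalso; exact (Hs f eq_refl).
    - rewrite (Hg e H), (Hg f eq_refl). reflexivity. }
  assert (Hlast : forall l : list (edge F), l = [] \/ exists l' e, l = l' ++ [e]).
  { intro l. induction l as [|x l _] using rev_ind; [left; auto | right; eauto]. }
  revert q Hq Hp. induction p as [|e p IH] using rev_ind; intros q Hq Hp Hr.
  - destruct (Hlast q) as [->|[q' [f ->]]]; [reflexivity|].
    exfalso. apply (Hcl (q' ++ [f])); auto.
    + destruct q'; discriminate.
  - destruct (Hlast q) as [->|[q' [f ->]]].
    + exfalso. apply (Hcl (p ++ [e])); auto. destruct p; discriminate.
    + rewrite !path_rng_app in Hr. simpl in Hr.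
      pose proof (Huniq _ _ Hr) as Hef. subst f.
      apply is_path_app in Hp. destruct Hp as [Hp [He _]].
      apply is_path_app in Hq. destruct Hq as [Hq [Hf _]].
      rewrite (IH q' Hq Hp); [reflexivity|congruence].
Qed.
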